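(* Let $\mathcal{V}$ be a finite set of nodes, $\mathcal{F}$ a finite set of flows, each flow $f$ with rate $\lambda_f>0$ and path node set $\mathcal{V}_f\subseteq\mathcal{V}$, each node $v$ with capacity $c_v>0$, and assume $\max_f\lambda_f\le\min_v c_v$. Fix $\mathcal{U}\subseteq\mathcal{V}$ and let $OPT(Q2,\mathcal{U})$ be the optimal value of the relaxed allocation problem Q2 for $\mathcal{U}$ (defined in the context). Let $\pi_{\mathrm{MCA}}^{\mathcal{U}}$ be the total rate of the flows fully assigned to the nodes of $\mathcal{U}$ by the MCA algorithm (defined in the context). Then $\pi_{\mathrm{MCA}}^{\mathcal{U}}\ge\frac12\,OPT(Q2,\mathcal{U})$.
   Context: Problem Q2 for $\mathcal{U}$: maximize $\sum_{f\in\mathcal{F}}\sum_{v\in\mathcal{V}_f\cap\mathcal{U}}\lambda_f^v$ over nonnegative $(\lambda_f^v)$ subject to $\sum_{f}\lambda_f^v\le c_v$ for $v\in\mathcal{U}$, $\lambda_f^v=0$ for $v\notin\mathcal{U}$, and $\sum_{v\in\mathcal{U}}\lambda_f^v\le\lambda_f$ for all $f$. Write $\mathcal{U}_f=\mathcal{V}_f\cap\mathcal{U}$ and $\mathcal{F}_{\mathcal{U}}=\{f:\mathcal{U}_f\ne\emptyset\}$. A flow is fully assigned if parts of it summing to $\lambda_f$ are assigned to nodes of $\mathcal{U}_f$, without exceeding node capacities. MCA algorithm. Phase I: compute an optimal basic (extreme-point) solution $\boldsymbol{\lambda}_{\mathcal{U}}$ of Q2 and set $y_f^v=\lambda_f^v/\lambda_f$.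 Assign (fully, temporarily) each flow $f$ with $y_f^v=1$ to node $v$. Build the bipartite graph $G'$ having an edge $(f,v)$ of weight $y_f^v$ for each pair with $0<y_f^v<1$ (it is a forest). While $G'$ is nonempty: Step 1: while some node $v$ of $G'$ has exactly one incident edge $(f,v)$, let $r'_v$ be the total rate of flows currently fully assigned to $v$; if $r'_v\ge\lambda_f^v$ set $y_f^v=0$ and delete $v$ from $G'$; otherwise unassign the flows currently fully assigned to $v$, assign $f$ entirely to $v$ ($y_f^v=1$, cancelling all other fractions of $f$), and delete $v$, $f$ and their incident edges. Step 2: pick a node $v_1$ of $G'$ of degree at least two, two distinct incident edges of $v_1$, and the longest paths $p_1,p_2$ in $G'$ starting at $v_1$ through these edges; perturb the edge weights along $p_1$ and $p_2$ so that the rate changes $\lambda_f\Delta y_f^v$ on successive edges are $+\delta,-\delta,+\delta,\dots$ along $p_1$ and $-\delta,+\delta,-\delta,\dots$ along $p_2$ (starting at $v_1$), which preserves node loads, flow totals at interior vertices and the total assigned traffic; increase $\delta$ until some weight becomes $0$ or $1$, remove edges with weight $0$, and fully assign $f$ to $v$ when $y_f^v=1$; then return to Step 1. Phase II: for each flow of $\mathcal{F}_{\mathcal{U}}$ not yet assigned, if the total remaining capacity of the nodes in $\mathcal{U}_f$ is at least $\lambda_f$, split $f$ and fully assign it to a subset of $\mathcal{U}_f$ using remaining capacities. *)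

(* Defs.v *)
From mathcomp Require Import all_boot all_order all_algebra.
Set Implicit Arguments. Unset Strict Implicit. Unset Printing Implicit Defensive.
Import Order.TTheory GRing.Theory Num.Theory.
Local Open Scope ring_scope.

Section MCA.
Variables (R : realFieldType) (F V : finType).
Variables (lam : F -> R) (c : V -> R) (Vf : F -> {set V}) (U : {set V}).

Definition Uf (f : F) : {set V} := Vf f :&: U.

(* x f v stands for lambda_f^v; variables only exist for v in V_f *)
Definition Q2_feasible (x : F -> V -> R) : Prop :=
  [/\ forall f v, 0 <= x f v,
      forall v, v \in U -> \sum_f x f v <= c v,
      forall f v, v \notin U -> x f v = 0,
      forall f v, v \notin Vf f -> x f v = 0 &
      forall f, \sum_(v in U) x f v <= lam f].

Definition Q2_obj (x : F -> V -> R) : R := \sum_f \sum_(v in Uf f) x f v.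

Definition Q2_OPT (opt : R) : Prop :=
  (exists2 x, Q2_feasible x & Q2_obj x = opt) /\
  (forall x, Q2_feasible x -> Q2_obj x <= opt).

Definition Q2_optimal (x : F -> V -> R) : Prop :=
  Q2_feasible x /\ forall x', Q2_feasible x' -> Q2_obj x' <= Q2_obj x.

(* basic = extreme point of the feasible polytope *)
Definition Q2_basic (x : F -> V -> R) : Prop :=
  Q2_feasible x /\
  forall (y z : F -> V -> R) (t : R), Q2_feasible y -> Q2_feasible z ->
    0 < t < 1 -> (forall f v, x f v = t * y f v + (1 - t) * z f v) ->
    forall f v, y f v = z f v.

(* state: the weights y f v; f is fully assigned to v iff y f v = 1;
   the edges of G' are the pairs with 0 < y f v < 1 *)
Definition frac_edge (y : F -> V -> R) (f : F) (v : V) : bool :=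
  (0 < y f v) && (y f v < 1).

Definition node_deg (y : F -> V -> R) (v : V) : nat :=
  #|[set f | frac_edge y f v]|.

Definition assigned_load (y : F -> V -> R) (v : V) : R :=
  \sum_(g | y g v == 1) lam g.

Definition adj (y : F -> V -> R) (a b : F + V) : bool :=
  match a, b with
  | inl f, inr v => frac_edge y f v
  | inr v, inl f => frac_edge y f v
  | _, _ => false
  end.

Definition gpath (y : F -> V -> R) (v1 : V) (p : seq (F + V)) : bool :=
  path (adj y) (inr v1) p && uniq (inr v1 :: p).

Definition longest_from (y : F -> V -> R) (v1 : V) (f1 : F) (p : seq (F + V)) : Prop :=
  [/\ gpath y v1 p, head (inr v1) p = inl f1 &
      forall q, gpath y v1 q -> head (inr v1) q = inl f1 -> (size q <= size p)%N].

Definition on_edge (f : F) (v : V) (a b : F + V) : bool :=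
  ((a == inl f) && (b == inr v)) || ((a == inr v) && (b == inl f)).

Definition psign (x0 : F + V) (xs : seq (F + V)) (f : F) (v : V) : R :=
  \sum_(k < size xs)
    (-1) ^+ k * (on_edge f v (nth x0 (x0 :: xs) k) (nth x0 (x0 :: xs) k.+1))%:R.

Definition step1_drop (y : F -> V -> R) (f : F) (v : V) : F -> V -> R :=
  fun g w => if (g == f) && (w == v) then 0 else y g w.

Definition step1_swap (y : F -> V -> R) (f : F) (v : V) : F -> V -> R :=
  fun g w => if g == f then (if w == v then 1 else 0)
             else if (w == v) && (y g v == 1) then 0 else y g w.

(* Step 2: rate change +d,-d,... along p1 and -d,+d,... along p2 *)
Definition perturb (y : F -> V -> R) (v1 : V) (p1 p2 : seq (F + V)) (d : R)
  : F -> V -> R :=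
  fun f v => y f v + d / lam f * (psign (inr v1) p1 f v - psign (inr v1) p2 f v).

Inductive phase1_step (y : F -> V -> R) : (F -> V -> R) -> Prop :=
| P1_leaf_drop f v :
    node_deg y v = 1%N -> frac_edge y f v ->
    lam f * y f v <= assigned_load y v ->
    phase1_step y (step1_drop y f v)
| P1_leaf_swap f v :
    node_deg y v = 1%N -> frac_edge y f v ->
    assigned_load y v < lam f * y f v ->
    phase1_step y (step1_swap y f v)
| P1_perturb v1 f1 f2 p1 p2 d :
    (forall v, node_deg y v <> 1%N) ->
    f1 != f2 -> longest_from y v1 f1 p1 -> longest_from y v1 f2 p2 ->
    0 < d ->
    (forall f v, 0 <= perturb y v1 p1 p2 d f v <= 1) ->
    (exists f v, psign (inr v1) p1 f v != psign (inr v1) p2 f v /\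
       (perturb y v1 p1 p2 d f v = 0 \/ perturb y v1 p1 p2 d f v = 1)) ->
    phase1_step y (perturb y v1 p1 p2 d).

Inductive phase1_reach : (F -> V -> R) -> (F -> V -> R) -> Prop :=
| P1_refl y : phase1_reach y y
| P1_trans y1 y2 y3 : phase1_step y1 y2 -> phase1_reach y2 y3 -> phase1_reach y1 y3.

(* z g w : rate of flow g assigned to node w *)
Definition rem_cap (z : F -> V -> R) (v : V) : R := c v - \sum_g z g v.

Definition valid_split (z : F -> V -> R) (f : F) (zf : V -> R) : Prop :=
  [/\ forall v, 0 <= zf v,
      forall v, v \notin Uf f -> zf v = 0,
      forall v, v \in Uf f -> zf v <= rem_cap z v &
      \sum_v zf v = lam f].

Definition upd (z : F -> V -> R) (f : F) (zf : V -> R) : F -> V -> R :=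
  fun g w => if g == f then zf w else z g w.

(* processing the flows of s in order; gain = total rate assigned in Phase II *)
Fixpoint phase2 (s : seq F) (z : F -> V -> R) (gain : R) : Prop :=
  match s with
  | [::] => gain = 0
  | f :: s' =>
      if lam f <= \sum_(v in Uf f) rem_cap z v then
        exists2 zf, valid_split z f zf & phase2 s' (upd z f zf) (gain - lam f)
      else phase2 s' z gain
  end.

Definition MCA_run (pi : R) : Prop :=
  exists (x0 y : F -> V -> R) (s : seq F) (gain : R),
    [/\ Q2_optimal x0, Q2_basic x0,
        phase1_reach (fun f v => x0 f v / lam f) y &
        (forall f v, ~~ frac_edge y f v)] /\
    [/\ uniq s,
        (forall f, (f \in s) = (~~ [exists v, y f v == 1]) && (Uf f != set0)),
        phase2 s (fun f v => if y f v == 1 then lam f else 0) gain &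
        pi = \sum_(f | [exists v, y f v == 1]) lam f + gain].

End MCA.

(* Main.v *)
Require Import Defs.
From mathcomp Require Import all_boot all_order all_algebra.
From mathcomp Require Import ring lra.
Set Implicit Arguments. Unset Strict Implicit. Unset Printing Implicit Defensive.
Import Order.TTheory GRing.Theory Num.Theory.
Local Open Scope ring_scope.

Section Pf.
Variables (R : realFieldType) (F V : finType).

Definition isl (a : F + V) : bool := if a is inl _ then true else false.
Definition bip (a b : F + V) : bool := isl a != isl b.

Lemma adj_bip (y : F -> V -> R) a b : adj y a b -> bip a b.
Proof. by case: a b => [?|?] [?|?]. Qed.
Lemma adj_sym (y : F -> V -> R) a b : adj y a b = adj y b a.
Proof. by case: a b => [?|?] [?|?]. Qed.
Lemma adj_irr (y : F -> V -> R) a : adj y a a = false.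
Proof. by case: a. Qed.

Lemma psign_nil x (f : F) (v : V) : psign R x [::] f v = 0.
Proof. by rewrite /psign big_ord0. Qed.

Lemma psign_cons x z zs (f : F) (v : V) :
  psign R x (z :: zs) f v = (on_edge f v x z)%:R - psign R z zs f v.
Proof.
rewrite /psign big_ord_recl /= expr0 mul1r; congr (_ + _).
rewrite -sumrN; apply: eq_bigr => i _.
rewrite /bump /= add1n exprS mulN1r mulNr; congr (- (_ * _)).
have Hi := ltn_ord i.
rewrite [nth x (z :: zs) i](set_nth_default z x); last by rewrite /= ltnS ltnW.
by rewrite add0n (set_nth_default z x).
Qed.

Lemma alt_last x p : path bip x p -> isl (last x p) = isl x (+) odd (size p).
Proof.
elim: p x => [|z zs IH] x /=; first by rewrite addbF.
case/andP=> Hxz Hp; rewrite IH //.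
move: Hxz; rewrite /bip; case: (isl x); case: (isl z) => //= _; by case: (odd _).
Qed.

Lemma sum_eq1 (T : finType) (w : T) : \sum_(v : T) ((w == v)%:R : R) = 1.
Proof.
rewrite (bigD1 w) //= eqxx big1 ?addr0 // => i /negPf; by rewrite eq_sym => ->.
Qed.

Lemma on_edgeFV (f g : F) (v w : V) : on_edge f v (inl g) (inr w) = (g == f) && (w == v).
Proof. by rewrite /on_edge !eqE /= orbF. Qed.
Lemma on_edgeVF (f g : F) (v w : V) : on_edge f v (inr w) (inl g) = (g == f) && (w == v).
Proof. by rewrite /on_edge !eqE /= andbC. Qed.

Lemma eq_inl (f g : F) : (inl g == inl f :> F + V) = (g == f). Proof. by []. Qed.
Lemma eq_inr (v w : V) : (inr w == inr v :> F + V) = (w == v). Proof. by []. Qed.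
Lemma eq_lr (f : F) (v : V) : (inl f == inr v :> F + V) = false. Proof. by []. Qed.
Lemma eq_rl (f : F) (v : V) : (inr v == inl f :> F + V) = false. Proof. by []. Qed.

Lemma edge_sumF a b (f : F) : bip a b ->
  \sum_(v : V) ((on_edge f v a b)%:R : R) = (a == inl f)%:R + (b == inl f)%:R.
Proof.
case: a b => [g|w] [g'|w'] //= _.
- under eq_bigr => v _ do rewrite on_edgeFV.
  rewrite ?eq_inl ?eq_rl ?addr0.
  case: (g == f); last by rewrite big1.
  by rewrite sum_eq1.
- under eq_bigr => v _ do rewrite on_edgeVF.
  rewrite ?eq_inl ?eq_rl ?add0r.
  case: (g' == f); last by rewrite big1.
  by rewrite sum_eq1.
Qed.

Lemma edge_sumV a b (v : V) : bip a b ->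
  \sum_(f : F) ((on_edge f v a b)%:R : R) = (a == inr v)%:R + (b == inr v)%:R.
Proof.
case: a b => [g|w] [g'|w'] //= _.
- under eq_bigr => f _ do rewrite on_edgeFV andbC.
  rewrite ?eq_inr ?eq_lr ?add0r.
  case: (w' == v); last by rewrite big1.
  by rewrite sum_eq1.
- under eq_bigr => f _ do rewrite on_edgeVF andbC.
  rewrite ?eq_inr ?eq_lr ?addr0.
  case: (w == v); last by rewrite big1.
  by rewrite sum_eq1.
Qed.

Lemma inc_sumF x xs (f : F) : path bip x xs ->
  \sum_(v : V) psign R x xs f v =
  (x == inl f)%:R - (-1) ^+ size xs * (last x xs == inl f)%:R.
Proof.
elim: xs x => [|z zs IH] x /=.
  by rewrite big1 ?expr0 ?mul1r ?subrr // => v _; rewrite psign_nil.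
case/andP=> Hxz Hp.
under eq_bigr => v _ do rewrite psign_cons.
rewrite sumrB edge_sumF // IH // exprS; ring.
Qed.

Lemma inc_sumV x xs (v : V) : path bip x xs ->
  \sum_(f : F) psign R x xs f v =
  (x == inr v)%:R - (-1) ^+ size xs * (last x xs == inr v)%:R.
Proof.
elim: xs x => [|z zs IH] x /=.
  by rewrite big1 ?expr0 ?mul1r ?subrr // => f _; rewrite psign_nil.
case/andP=> Hxz Hp.
under eq_bigr => f _ do rewrite psign_cons.
rewrite sumrB edge_sumV // IH // exprS; ring.
Qed.

Lemma psign_frac (y : F -> V -> R) x xs f v :
  psign R x xs f v != 0 -> path (adj y) x xs -> frac_edge y f v.
Proof.
elim: xs x => [|z zs IH] x /=; first by rewrite psign_nil eqxx.
rewrite psign_cons => Hne /andP [Hxz Hp].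
case E: (on_edge f v x z).
  clear Hne IH Hp; move: E Hxz; case: x => [g|w]; case: z => [g'|w'] //=.
  - by rewrite on_edgeFV => /andP [/eqP -> /eqP ->].
  - by rewrite on_edgeVF => /andP [/eqP -> /eqP ->].
apply: (IH z) => //; move: Hne; rewrite E sub0r oppr_eq0.
by [].
Qed.

Lemma psign_zero x xs (f : F) (v : V) :
  path (fun a b => ~~ on_edge f v a b) x xs -> psign R x xs f v = 0.
Proof.
elim: xs x => [|z zs IH] x /=; first by rewrite psign_nil.
by case/andP=> /negPf H Hp; rewrite psign_cons H IH // subrr.
Qed.

Lemma path_avoid (T : eqType) (r : rel T) a z zs :
  (forall u w, u != a -> w != a -> r u w) -> a \notin z :: zs -> path r z zs.
Proof.
move=> Hr; elim: zs z => [|t ts IH] z //=.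
rewrite !inE negb_or => /andP [Hz Hts]; move: Hts; rewrite negb_or => /andP [Ht Hts].
rewrite Hr 1?eq_sym //=; apply: IH; by rewrite inE negb_or Ht.
Qed.

Lemma eps_exists (I : finType) (a b : I -> R) :
  (forall i, a i != 0 -> 0 < b i) ->
  exists2 e, 0 < e & forall i, a i != 0 -> e * `|a i| <= b i.
Proof.
move=> Hb.
pose S := \sum_(i | a i != 0) `|a i| / b i.
have S0 : 0 <= S by apply: sumr_ge0 => i Hi; rewrite divr_ge0 // ltW // Hb.
exists (1 + S)^-1; first by rewrite invr_gt0 ltr_wpDr.
move=> i Hi.
have Hbi := Hb i Hi.
have HS : `|a i| / b i <= S.
  rewrite /S (bigD1 i) //= lerDl; apply: sumr_ge0 => j /andP [Hj _].
  by rewrite divr_ge0 // ltW // Hb.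
rewrite mulrC -ler_pdivlMr ?invr_gt0 ?ltr_wpDr // invrK.
have -> : `|a i| = b i * (`|a i| / b i) by field; rewrite gt_eqF.
rewrite ler_pM2l //; lra.
Qed.

Lemma mem_split (T : eqType) (u : T) s : u \in s -> exists pre post, s = pre ++ u :: post.
Proof. by case/splitPr => p1 p2; exists p1, p2. Qed.

Lemma head_rcons (T : eqType) (x u : T) (p : seq T) : p != [::] -> head x (rcons p u) = head x p.
Proof. by case: p. Qed.

Lemma last_in_mid (T : eqType) (b : T) mid : mid != [::] -> last b mid \in mid.
Proof. by case: mid => [|m ms] //= _; rewrite mem_last. Qed.

Definition nocyc (y : F -> V -> R) := forall a q, path (adj y) a q -> uniq (a :: q) ->
  (1 < size q)%N -> adj y (last a q) a -> False.

Lemma edge_pick (a b : F + V) : bip a b -> exists f v,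
  [/\ on_edge f v a b, forall u w, on_edge f v u w -> (u == a) || (w == a) &
      forall u, on_edge f v u a -> u = b].
Proof.
case: a b => [g|w] [g'|w'] //= _.
- exists g, w'; split; first by rewrite on_edgeFV !eqxx.
  + by move=> u w; rewrite /on_edge => /orP [] /andP [/eqP -> /eqP ->]; rewrite eqxx ?orbT.
  + by move=> u; rewrite /on_edge => /orP [] /andP [/eqP -> /eqP H].
- exists g', w; split; first by rewrite on_edgeVF !eqxx.
  + by move=> u w'; rewrite /on_edge => /orP [] /andP [/eqP -> /eqP ->]; rewrite eqxx ?orbT.
  + by move=> u; rewrite /on_edge => /orP [] /andP [/eqP -> /eqP H].
Qed.

Section Basic.
Variables (lam : F -> R) (c : V -> R) (Vf : F -> {set V}) (U : {set V}).
Hypothesis lam_pos : forall f, 0 < lam f.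
Variable x0 : F -> V -> R.

Lemma basic_nocyc : Q2_basic lam c Vf U x0 -> nocyc (fun f v => x0 f v / lam f).
Proof.
set y0 := (fun f v => x0 f v / lam f).
move=> [Hfeas Hbas] a q Hp Hu Hs Hl.
case: q Hp Hu Hs Hl => [|b mid] // Hp Hu Hs Hl.
have Hmid : mid != [::] by case: mid Hs {Hp Hu Hl}.
set q := b :: mid in Hp Hu Hl.
set xs := rcons q a.
have Hpx : path (adj y0) a xs by rewrite rcons_path Hp Hl.
have Hbx : path bip a xs := sub_path (@adj_bip y0) Hpx.
have Hev : ~~ odd (size xs).
  have Hb : path bip a q := sub_path (@adj_bip y0) Hp.
  have := alt_last Hb; have := adj_bip Hl; rewrite /bip => /negPf.
  rewrite size_rcons /=; case: (isl (last a q)); case: (isl a); case: (odd _) => //.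
have Hlast : last a xs = a by rewrite last_rcons.
pose D f v := psign R a xs f v.
have Hrow f : \sum_v D f v = 0.
  by rewrite /D inc_sumF // Hlast -signr_odd (negbTE Hev) expr0 mul1r subrr.
have Hcol v : \sum_f D f v = 0.
  by rewrite /D inc_sumV // Hlast -signr_odd (negbTE Hev) expr0 mul1r subrr.
have Hpos f v : D f v != 0 -> 0 < x0 f v.
  move=> /psign_frac /(_ Hpx) /andP [H _].
  by move: H; rewrite /y0 pmulr_lgt0 // invr_gt0.
case/andP: Hp => Hab Hp.
have [f0 [v0 [Hon Hoth Hlst]]] := edge_pick (adj_bip Hab).
have HD : D f0 v0 = 1.
  rewrite /D /xs rcons_cons psign_cons Hon psign_zero ?subr0 //.
  rewrite rcons_path; apply/andP; split.
    apply: (@path_avoid _ _ a) => [u w Hu' Hw'|].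
      by apply/negP => /Hoth; rewrite (negbTE Hu') (negbTE Hw').
    by move: Hu => /andP [].
  apply/negP => /Hlst Hlb.
  move: Hu => /andP [_] /andP [Hb _].
  by move: (last_in_mid b Hmid); rewrite Hlb (negbTE Hb).
have [e e0 He] := @eps_exists _ (fun i : F * V => D i.1 i.2) (fun i => x0 i.1 i.2)
  (fun i Hi => Hpos i.1 i.2 Hi).
have Hfeas_k k : `|k| <= e -> Q2_feasible lam c Vf U (fun f v => x0 f v + k * D f v).
  move=> Hk; case: Hfeas => H1 H2 H3 H4 H5.
  have Hz f v : x0 f v = 0 -> D f v = 0.
    move=> Hx; apply/eqP; apply/negP => /negP /Hpos; by rewrite Hx ltxx.
  split.
  - move=> f v; have [HD0|HD0] := eqVneq (D f v) 0; first by rewrite HD0 mulr0 addr0.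
    have := He (f, v) HD0; rewrite /=.
    have H := ler_norm (- (k * D f v)); rewrite normrN normrM in H.
    have : `|k| * `|D f v| <= e * `|D f v| by rewrite ler_wpM2r.
    lra.
  - move=> v Hv; rewrite big_split /= -mulr_sumr Hcol mulr0 addr0; exact: H2.
  - by move=> f v Hv; rewrite H3 // (Hz f v (H3 f v Hv)) mulr0 addr0.
  - by move=> f v Hv; rewrite H4 // (Hz f v (H4 f v Hv)) mulr0 addr0.
  - move=> f; rewrite big_split /= -mulr_sumr.
    have -> : \sum_(v in U) D f v = 0.
      rewrite big_mkcond /= -[X in _ = X](Hrow f); apply: eq_bigr => v _.
      by case: ifP => // /negbT Hv; rewrite Hz // H3.
    by rewrite mulr0 addr0.
have Hn : `|e| <= e by rewrite ger0_norm // ltW.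
have Hn' : `|- e| <= e by rewrite normrN.
have := Hbas _ _ (2^-1) (Hfeas_k e Hn) (Hfeas_k (- e) Hn') _ _ f0 v0.
rewrite HD !mulr1 => H.
have H1 : (0 : R) < (2%:R : R)^-1 < 1.
  by apply/andP; split; [rewrite invr_gt0 ltr0n | rewrite invf_lt1 ?ltr0n // ltr1n].
have H2 : forall f v, x0 f v = 2^-1 * (x0 f v + e * D f v) + (1 - 2^-1) * (x0 f v + - e * D f v).
  by move=> f v; field.
have := H H1 H2; lra.
Qed.
End Basic.

Lemma adj_mono (y y' : F -> V -> R) : (forall f v, frac_edge y' f v -> frac_edge y f v) ->
  forall a b, adj y' a b -> adj y a b.
Proof. by move=> H [g|w] [g'|w'] //= /H. Qed.

Lemma nocyc_mono (y y' : F -> V -> R) : (forall f v, frac_edge y' f v -> frac_edge y f v) ->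
  nocyc y -> nocyc y'.
Proof.
move=> H Hn a q Hp Hu Hs Hl; apply: (Hn a q) => //.
  exact: (sub_path (fun a1 b1 => @adj_mono y y' H a1 b1) Hp).
exact: (adj_mono H Hl).
Qed.

Lemma leaf (y : F -> V -> R) v1 p' l : nocyc y -> gpath y v1 (rcons p' l) ->
  (forall q, gpath y v1 q -> head (inr v1) q = head (inr v1) (rcons p' l) ->
     (size q <= size (rcons p' l))%N) ->
  forall u, adj y l u -> u = last (inr v1) p'.
Proof.
move=> Hn /andP [Hp Hu] Hmax u Hlu.
have Hs : inr v1 :: rcons p' l = rcons (inr v1 :: p') l by [].
case Hin: (u \in inr v1 :: p').
  have [pre [post Epre]] := mem_split Hin.
  have Elast : last (inr v1) p' = last u post.
    by have := congr1 (last (inr v1)) Epre; rewrite /= last_cat.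
  case: post Epre Elast => [|b mid] Epre Elast; first by rewrite Elast.
  exfalso.
  have E2 : inr v1 :: rcons p' l = pre ++ u :: rcons (b :: mid) l.
    by rewrite Hs Epre rcons_cat.
  apply: (Hn u (rcons (b :: mid) l)).
  - have : sorted (adj y) (inr v1 :: rcons p' l) by [].
    by rewrite E2 sorted_cat_cons => /andP [].
  - by move: Hu; rewrite E2 cat_uniq => /and3P [].
  - by rewrite size_rcons.
  - by rewrite last_rcons.
have Hul : u != l by apply/eqP => E; rewrite E adj_irr in Hlu.
exfalso; suff: (size (rcons (rcons p' l) u) <= size (rcons p' l))%N.
  by rewrite [X in (X <= _)%N]size_rcons ltnn.
apply: Hmax.
  rewrite /gpath rcons_path Hp last_rcons Hlu andTb.
  have -> : inr v1 :: rcons (rcons p' l) u = rcons (inr v1 :: rcons p' l) u by [].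
  rewrite rcons_uniq Hu andbT -rcons_cons.
  by rewrite mem_rcons inE negb_or Hul Hin.
by rewrite head_rcons // -size_eq0 size_rcons.
Qed.

Lemma endpoint (y : F -> V -> R) v1 f1 p : nocyc y -> (forall v, node_deg y v <> 1%N) ->
  longest_from y v1 f1 p ->
  exists fe w, [/\ last (inr v1) p = inl fe, frac_edge y fe w,
    (forall w', frac_edge y fe w' -> w' = w) & odd (size p)].
Proof.
move=> Hn Hdeg [Hg Hh Hmax].
move: Hg Hh Hmax; case/lastP: p => [|p' l] Hg Hh Hmax //.
have Hmax' : forall q, gpath y v1 q -> head (inr v1) q = head (inr v1) (rcons p' l) ->
     (size q <= size (rcons p' l))%N by move=> q Hq; rewrite Hh; apply: Hmax.
have Hl := leaf Hn Hg Hmax'.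
have Hpr : adj y (last (inr v1) p') l by move: Hg => /andP []; rewrite rcons_path => /andP [].
have Hodd : isl l = odd (size (rcons p' l)).
  have Hb : path bip (inr v1) (rcons p' l).
    by case/andP: Hg => Hg _; exact: (sub_path (fun a1 b1 => @adj_bip y a1 b1) Hg).
  by have := alt_last Hb; rewrite last_rcons /=.
case: l Hg Hh Hmax Hmax' Hl Hpr Hodd => [fe|w] Hg Hh Hmax Hmax' Hl Hpr Hodd.
  case Epr : (last (inr v1) p') Hpr Hl => [g|w] Hpr Hl //.
  exists fe, w; split => //; first by rewrite last_rcons.
  by move=> w' Hw'; have := Hl (inr w') Hw'; case.
case Epr : (last (inr v1) p') Hpr Hl => [g|w0] Hpr Hl //.
exfalso; apply: (Hdeg w).
case: (pickP (fun g' => frac_edge y g' w && (g' != g))) => [g' /andP [Hf Hne] | Hnone].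
  by have := Hl (inl g') Hf; case => E; rewrite E eqxx in Hne.
apply/eqP/cards1P; exists g; apply/setP => h; rewrite !inE.
have := Hnone h; case: (eqVneq h g) => [->|_] /=; first by move=> _; exact: Hpr.
by rewrite andbT.
Qed.

Lemma S_end (v1 : V) p fe (f : F) : path bip (inr v1) p -> last (inr v1) p = inl fe ->
  odd (size p) -> \sum_v psign R (inr v1) p f v = (fe == f)%:R.
Proof.
move=> Hb Hl Ho; rewrite inc_sumF // Hl eq_rl eq_inl -signr_odd Ho expr1.
by rewrite sub0r mulN1r opprK.
Qed.

Lemma deg0P (y : F -> V -> R) v : (node_deg y v == 0%N) = [forall f, ~~ frac_edge y f v].
Proof.
rewrite /node_deg cards_eq0; apply/eqP/forallP => [H f|H].
  apply/negP => Hf; have : f \in [set f | frac_edge y f v] by rewrite inE.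
  by rewrite H in_set0.
by apply/eqP; rewrite -subset0; apply/subsetP => f; rewrite inE => Hf; move: (H f); rewrite Hf.
Qed.

Lemma deg1 (y : F -> V -> R) v f g : node_deg y v = 1%N -> frac_edge y f v ->
  frac_edge y g v -> g = f.
Proof.
move/eqP/cards1P => [x Hx] Hf Hg.
have : f \in [set f | frac_edge y f v] by rewrite inE.
have : g \in [set f | frac_edge y f v] by rewrite inE.
by rewrite Hx !inE => /eqP -> /eqP ->.
Qed.

Lemma nf01 (a : R) : 0 <= a <= 1 -> ~~ ((0 < a) && (a < 1)) -> a = 0 \/ a = 1.
Proof.
case/andP => H0 H1; rewrite negb_and -!leNgt => /orP [Ha|Ha].
  by left; apply/eqP; rewrite eq_le Ha H0.
by right; apply/eqP; rewrite eq_le H1 Ha.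
Qed.

Lemma sum_two (I : finType) (g : I -> R) i j : (forall k, 0 <= g k) -> i != j ->
  g i + g j <= \sum_k g k.
Proof.
move=> Hg Hij; rewrite (bigD1 i) //= (bigD1 j) /=; last by rewrite eq_sym.
by rewrite addrA lerDl sumr_ge0.
Qed.

Lemma sub_sum (I : finType) (P Q : pred I) (g : I -> R) :
  (forall v, P v -> Q v) -> (forall v, Q v -> 0 <= g v) ->
  \sum_(v | P v) g v <= \sum_(v | Q v) g v.
Proof.
move=> HPQ Hg; rewrite [X in X <= _]big_mkcond [X in _ <= X]big_mkcond.
apply: ler_sum => v _; case: ifP => HP; first by rewrite (HPQ v HP).
by case: ifP => // /Hg.
Qed.

Lemma sub_sum1 (I : finType) (P Q : pred I) (g : I -> R) v0 :
  (forall v, P v -> Q v) -> (forall v, Q v -> 0 <= g v) -> ~~ P v0 -> Q v0 ->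
  \sum_(v | P v) g v + g v0 <= \sum_(v | Q v) g v.
Proof.
move=> HPQ Hg HP0 HQ0; rewrite [X in _ <= X](bigD1 v0) //=. rewrite [X in _ <= X]addrC lerD2r.
apply: sub_sum => v; last by case/andP=> Hv _; apply: Hg.
move=> Hv; rewrite HPQ //=; apply/eqP => E; by move: HP0; rewrite -E Hv.
Qed.

Definition Inv (y0 y : F -> V -> R) := [/\ forall f v, 0 <= y f v <= 1,
  forall f, \sum_v y f v <= 1 & forall f v, frac_edge y f v -> frac_edge y0 f v].
Definition T (lam : F -> R) (y : F -> V -> R) := \sum_f lam f * \sum_v y f v.
Definition load (lam : F -> R) (y : F -> V -> R) v := \sum_f lam f * y f v.
Definition P (lam : F -> R) (y : F -> V -> R) :=
  T lam y + \sum_(v | node_deg y v == 0%N) load lam y v.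

Section Steps.
Variable lam : F -> R.
Hypothesis lam_pos : forall f, 0 < lam f.
Variable y0 : F -> V -> R.

Lemma load_ge0 y v : (forall f v, 0 <= y f v <= 1) -> 0 <= load lam y v.
Proof.
move=> Hb; apply: sumr_ge0 => f _; apply: mulr_ge0; first exact: ltW.
by case/andP: (Hb f v).
Qed.

Lemma drop_ok y f0 v0 : Inv y0 y -> node_deg y v0 = 1%N -> frac_edge y f0 v0 ->
  lam f0 * y f0 v0 <= assigned_load lam y v0 ->
  Inv y0 (step1_drop y f0 v0) /\ P lam y <= P lam (step1_drop y f0 v0).
Proof.
move=> [Hb Hr Hs] Hd Hf Hle; set y' := step1_drop y f0 v0.
have Ey' g w : y' g w = if (g == f0) && (w == v0) then 0 else y g w by [].
have Hb' g w : 0 <= y' g w <= 1 by rewrite Ey'; case: ifP => _ //; rewrite lexx ler01.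
have Hs' g w : frac_edge y' g w -> frac_edge y g w.
  by rewrite /frac_edge Ey'; case: ifP => _ //; rewrite ltxx.
have Hle' g w : y' g w <= y g w by rewrite Ey'; case: ifP => _ //; case/andP: (Hb g w).
split.
  split => // [g|g w Hg]; last exact/Hs/Hs'.
  by apply: le_trans (Hr g); apply: ler_sum => w _; apply: Hle'.
have HT : T lam y = T lam y' + lam f0 * y f0 v0.
  rewrite /T (bigD1 f0) //= [X in _ = X + _](bigD1 f0) //=.
  have -> : \sum_(g | g != f0) lam g * \sum_w y' g w = \sum_(g | g != f0) lam g * \sum_w y g w.
    apply: eq_bigr => g /negPf Hg; congr (_ * _); apply: eq_bigr => w _; by rewrite Ey' Hg.
  have -> : \sum_w y f0 w = \sum_w y' f0 w + y f0 v0.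
    rewrite (bigD1 v0) //= [X in _ = X + _](bigD1 v0) //= Ey' !eqxx /= add0r addrC.
    congr (_ + _); apply: eq_bigr => w /negPf Hw; by rewrite Ey' Hw andbF.
  ring.
have Hdm w : node_deg y w == 0%N -> node_deg y' w == 0%N.
  rewrite !deg0P => /forallP H; apply/forallP => g; apply/negP => /Hs'; apply/negP/H.
have Hload w : node_deg y w == 0%N -> load lam y' w = load lam y w.
  move=> Hw; have Hwv : (w == v0) = false by apply/negbTE; apply/eqP => E; rewrite E Hd in Hw.
  by apply: eq_bigr => g _; rewrite Ey' Hwv andbF.
have Hv0 : node_deg y' v0 == 0%N.
  rewrite deg0P; apply/forallP => g; apply/negP => Hg.
  have E := deg1 Hd Hf (Hs' _ _ Hg).
  by move: Hg; rewrite E /frac_edge Ey' !eqxx ltxx.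
have Hload0 : load lam y' v0 = assigned_load lam y v0.
  rewrite /load /assigned_load [RHS]big_mkcond; apply: eq_bigr => g _.
  case: (eqVneq g f0) => [->|Hg].
    rewrite Ey' !eqxx mulr0; case: ifP => // /eqP E.
    by move: Hf; rewrite /frac_edge E ltxx andbF.
  rewrite Ey' (negbTE Hg) /=.
  have Hnf : ~~ frac_edge y g v0 by apply/negP => /(deg1 Hd Hf) E; rewrite E eqxx in Hg.
  case: (nf01 (Hb g v0) Hnf) => ->; last by rewrite eqxx mulr1.
  by rewrite mulr0 eq_sym oner_eq0.
rewrite /P.
have H1 : \sum_(w | node_deg y w == 0%N) load lam y w = \sum_(w | node_deg y w == 0%N) load lam y' w.
  by apply: eq_bigr => w Hw; rewrite Hload.
have H2 : \sum_(w | node_deg y w == 0%N) load lam y' w + load lam y' v0 <=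
          \sum_(w | node_deg y' w == 0%N) load lam y' w.
  apply: sub_sum1 => //; [by move=> w _; apply: load_ge0 | by rewrite Hd].
lra.
Qed.


Lemma swap_ok y f0 v0 : Inv y0 y -> node_deg y v0 = 1%N -> frac_edge y f0 v0 ->
  assigned_load lam y v0 < lam f0 * y f0 v0 ->
  Inv y0 (step1_swap y f0 v0) /\ P lam y <= P lam (step1_swap y f0 v0).
Proof.
move=> [Hb Hr Hs] Hd Hf Hlt; set y' := step1_swap y f0 v0.
have Ey' g w : y' g w = if g == f0 then (if w == v0 then 1 else 0)
  else if (w == v0) && (y g v0 == 1) then 0 else y g w by [].
have Hb' g w : 0 <= y' g w <= 1.
  by rewrite Ey'; case: ifP => _; [case: ifP => _; rewrite ?lexx ?ler01 | case: ifP => _ //; rewrite lexx ler01].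
have Hs' g w : frac_edge y' g w -> frac_edge y g w.
  rewrite /frac_edge Ey'; case: ifP => _; first by case: ifP => _; rewrite ?ltxx ?andbF.
  by case: ifP => _ //; rewrite ltxx.
have Hf01 := Hb f0 v0.
have Hyf : 0 < y f0 v0 < 1 by [].
have Hrow1 : \sum_w (if w == v0 then 1 else 0 : R) = 1.
  by rewrite (bigD1 v0) //= eqxx big1 ?addr0 // => w /negPf ->.
split.
  split => // [g|g w Hg]; last exact/Hs/Hs'.
  case: (eqVneq g f0) => [->|Hg].
    by under eq_bigr => w _ do rewrite Ey' eqxx; rewrite Hrow1.
  apply: le_trans (Hr g); apply: ler_sum => w _; rewrite Ey' (negbTE Hg).
  case: ifP => _; last exact: lexx.
  by case/andP: (Hb g w).
have HT : T lam y <= T lam y' + assigned_load lam y v0.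
  rewrite /T /assigned_load [X in _ <= _ + X]big_mkcond -big_split /=; apply: ler_sum => g _.
  case: (eqVneq g f0) => [->|Hg].
    have -> : \sum_w y' f0 w = 1 by under eq_bigr => w _ do rewrite Ey' eqxx; rewrite Hrow1.
    rewrite mulr1.
    have := Hr f0; have := lam_pos f0; case: ifP => _; nra.
  have -> : \sum_w y g w = \sum_w y' g w + (if y g v0 == 1 then 1 else 0).
    rewrite (bigD1 v0) //= [X in _ = X + _](bigD1 v0) //= Ey' (negbTE Hg) eqxx /=.
    have -> : \sum_(w | w != v0) y' g w = \sum_(w | w != v0) y g w.
      by apply: eq_bigr => w /negPf Hw; rewrite Ey' (negbTE Hg) Hw.
    by case: ifP => [/eqP ->|_]; rewrite ?add0r ?addr0 // addrC.
  by case: ifP => _; rewrite ?mulr1 ?mulr0 ?addr0 // mulrDr mulr1.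
have Hdm w : node_deg y w == 0%N -> node_deg y' w == 0%N.
  rewrite !deg0P => /forallP H; apply/forallP => g; apply/negP => /Hs'; apply/negP/H.
have Hload w : node_deg y w == 0%N -> load lam y' w = load lam y w.
  move=> Hw; have Hwv : (w == v0) = false by apply/negbTE; apply/eqP => E; rewrite E Hd in Hw.
  apply: eq_bigr => g _; rewrite Ey' Hwv /=.
  case: ifP => // /eqP ->.
  have Hnf : ~~ frac_edge y f0 w by move: Hw; rewrite deg0P => /forallP.
  case: (nf01 (Hb f0 w) Hnf) => [-> //|H1].
  have : y f0 v0 + y f0 w <= \sum_u y f0 u.
    apply: sum_two; first by move=> k; case/andP: (Hb f0 k).
    by rewrite eq_sym Hwv.
  have := Hr f0; rewrite H1; move: Hyf => /andP [Hy0 _]; lra.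
have Hv0 : node_deg y' v0 == 0%N.
  rewrite deg0P; apply/forallP => g; apply/negP => Hg.
  have E := deg1 Hd Hf (Hs' _ _ Hg).
  by move: Hg; rewrite E /frac_edge Ey' !eqxx ltxx andbF.
have Hload0 : load lam y' v0 = lam f0.
  rewrite /load (bigD1 f0) //= Ey' !eqxx mulr1 big1 ?addr0 // => g Hg.
  rewrite Ey' (negbTE Hg) eqxx /=.
  have Hnf : ~~ frac_edge y g v0 by apply/negP => /(deg1 Hd Hf) E; rewrite E eqxx in Hg.
  case: (nf01 (Hb g v0) Hnf) => ->; first by rewrite eq_sym oner_eq0 mulr0.
  by rewrite eqxx mulr0.
rewrite /P.
have H1 : \sum_(w | node_deg y w == 0%N) load lam y w = \sum_(w | node_deg y w == 0%N) load lam y' w.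
  by apply: eq_bigr => w Hw; rewrite Hload.
have H2 : \sum_(w | node_deg y w == 0%N) load lam y' w + load lam y' v0 <=
          \sum_(w | node_deg y' w == 0%N) load lam y' w.
  apply: sub_sum1 => //; [by move=> w _; apply: load_ge0 | by rewrite Hd].
have H3 : lam f0 * y f0 v0 <= lam f0.
  have := lam_pos f0; move: Hf01 => /andP [_ Hy1]; nra.
lra.
Qed.


Lemma perturb_ok y v1 f1 f2 p1 p2 d : Inv y0 y -> nocyc y0 ->
  (forall v, node_deg y v <> 1%N) -> longest_from y v1 f1 p1 -> longest_from y v1 f2 p2 ->
  0 < d -> (forall f v, 0 <= perturb lam y v1 p1 p2 d f v <= 1) ->
  Inv y0 (perturb lam y v1 p1 p2 d) /\ P lam y <= P lam (perturb lam y v1 p1 p2 d).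
Proof.
move=> [Hb Hr Hs] Hn0 Hdeg H1 H2 Hd Hb'.
set y' := perturb lam y v1 p1 p2 d.
have Hn : nocyc y := nocyc_mono Hs Hn0.
have [fe1 [w1 [Hl1 Hfw1 Hu1 Ho1]]] := endpoint Hn Hdeg H1.
have [fe2 [w2 [Hl2 Hfw2 Hu2 Ho2]]] := endpoint Hn Hdeg H2.
have Hp1 : path (adj y) (inr v1) p1 by case: H1 => /andP [].
have Hp2 : path (adj y) (inr v1) p2 by case: H2 => /andP [].
have Hq1 : path bip (inr v1) p1 := sub_path (fun a b => @adj_bip y a b) Hp1.
have Hq2 : path bip (inr v1) p2 := sub_path (fun a b => @adj_bip y a b) Hp2.
have HS1 f : \sum_v psign R (inr v1) p1 f v = (fe1 == f)%:R := S_end f Hq1 Hl1 Ho1.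
have HS2 f : \sum_v psign R (inr v1) p2 f v = (fe2 == f)%:R := S_end f Hq2 Hl2 Ho2.
have Ey' f v : y' f v = y f v + d / lam f * (psign R (inr v1) p1 f v - psign R (inr v1) p2 f v) by [].
have Hz f v : ~~ frac_edge y f v -> y' f v = y f v.
  move=> Hnf; rewrite Ey'.
  have Z1 : psign R (inr v1) p1 f v = 0.
    case: (eqVneq (psign R (inr v1) p1 f v) 0) => // /psign_frac /(_ Hp1) H.
    by rewrite H in Hnf.
  have Z2 : psign R (inr v1) p2 f v = 0.
    case: (eqVneq (psign R (inr v1) p2 f v) 0) => // /psign_frac /(_ Hp2) H.
    by rewrite H in Hnf.
  by rewrite Z1 Z2 subrr mulr0 addr0.
have Hs' f v : frac_edge y' f v -> frac_edge y f v.
  apply: contraTT => Hnf; by rewrite /frac_edge (Hz _ _ Hnf).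
have Hrowsum f : \sum_v y' f v = \sum_v y f v + d / lam f * ((fe1 == f)%:R - (fe2 == f)%:R).
  under eq_bigr => v _ do rewrite Ey'.
  by rewrite big_split /= -mulr_sumr sumrB HS1 HS2.
split.
  split => // [f|f v Hf]; last exact/Hs/Hs'.
  case: (eqVneq fe1 f) => [<-|Hne].
    rewrite (bigD1 w1) //= big1 ?addr0; first by case/andP: (Hb' fe1 w1).
    move=> v Hv.
    have Hnf : ~~ frac_edge y fe1 v by apply/negP => /Hu1 E; rewrite E eqxx in Hv.
    rewrite Hz //.
    case: (nf01 (Hb fe1 v) Hnf) => // H1'.
    have : y fe1 w1 + y fe1 v <= \sum_u y fe1 u.
      apply: sum_two; first by move=> k; case/andP: (Hb fe1 k).
      by rewrite eq_sym.
    have := Hr fe1; move: Hfw1 => /andP [Hy0 _]; lra.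
  rewrite Hrowsum.
  have -> : (fe1 == f)%:R = 0 :> R by rewrite (negbTE Hne).
  have : d / lam f * (0 - (fe2 == f)%:R) <= 0.
    by rewrite sub0r mulrN oppr_le0 mulr_ge0 // ?ler0n // ltW // divr_gt0.
  have := Hr f; lra.
have HT : T lam y' = T lam y.
  rewrite /T; under eq_bigr => f _ do rewrite Hrowsum mulrDr.
  rewrite big_split /=.
  have -> : \sum_f lam f * (d / lam f * ((fe1 == f)%:R - (fe2 == f)%:R)) =
            \sum_f d * ((fe1 == f)%:R - (fe2 == f)%:R).
    apply: eq_bigr => f _; field; by rewrite gt_eqF.
  by rewrite -mulr_sumr sumrB !sum_eq1 subrr mulr0 addr0.
have Hdm w : node_deg y w == 0%N -> node_deg y' w == 0%N.
  rewrite !deg0P => /forallP H; apply/forallP => g; apply/negP => /Hs'; apply/negP/H.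
have Hload w : node_deg y w == 0%N -> load lam y' w = load lam y w.
  rewrite deg0P => /forallP Hw; apply: eq_bigr => g _; by rewrite Hz.
rewrite /P HT lerD2l.
have -> : \sum_(w | node_deg y w == 0%N) load lam y w = \sum_(w | node_deg y w == 0%N) load lam y' w.
  by apply: eq_bigr => w Hw; rewrite Hload.
apply: sub_sum => // w _; apply: load_ge0 => g v; exact: Hb'.
Qed.

Lemma reach_ok y y' : nocyc y0 -> Inv y0 y -> phase1_reach lam y y' ->
  Inv y0 y' /\ P lam y <= P lam y'.
Proof.
move=> Hn0 Hi Hr; elim: Hr Hi => [z|y1 y2 y3 Hst Hr IH] Hi; first by split.
have [Hi2 Hle] : Inv y0 y2 /\ P lam y1 <= P lam y2.
  case: Hst Hi => [f v Hd Hf Hl|f v Hd Hf Hl|v1 f1 f2 p1 p2 d Hd _ H1 H2 Hdp Hb _] Hi.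
  - exact: drop_ok.
  - exact: swap_ok.
  - exact: (perturb_ok Hi Hn0 Hd H1 H2 Hdp Hb).
have [Hi3 Hle'] := IH Hi2; split => //; exact: le_trans Hle Hle'.
Qed.

End Steps.
End Pf.

Lemma gain_ge0 (R : realFieldType) (F V : finType) (lam : F -> R) (c : V -> R)
  (Vf : F -> {set V}) (U : {set V}) : (forall f, 0 < lam f) ->
  forall s z g, phase2 lam c Vf U s z g -> 0 <= g.
Proof.
move=> Hl; elim=> [|f s IH] z g /=; first by move->.
case: ifP => _; last exact: IH.
case=> zf _ /IH H; have := Hl f; lra.
Qed.

Unset Implicit Arguments.

Theorem lemma4 (R : realFieldType) (F V : finType)
  (lam : F -> R) (c : V -> R) (Vf : F -> {set V}) (U : {set V}) :
  (forall f, 0 < lam f) -> (forall v, 0 < c v) ->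
  (forall f v, lam f <= c v) ->
  forall opt pi : R,
    Q2_OPT lam c Vf U opt -> MCA_run lam c Vf U pi -> opt / 2 <= pi.
Proof.
move=> Hlam Hc Hlc opt pi [[x Hxf Hxo] Hopt]
  [x0 [y [s [gain [[Hx0o Hx0b Hreach Hnofrac] [Hun Hs Hph2 Hpi]]]]]].
set y0 := (fun f v => x0 f v / lam f).
have Hn0 : nocyc y0 := basic_nocyc Hlam Hx0b.
have Hle1 : opt <= Q2_obj Vf U x0 by rewrite -Hxo; apply: Hx0o.2.
have Hx0f := Hx0o.1.
case: Hx0f => F1 F2 F3 F4 F5.
have Hrowx f : \sum_v x0 f v = \sum_(v in U) x0 f v.
  rewrite [RHS]big_mkcond; apply: eq_bigr => v _; case: ifP => // /negbT Hv; exact: F3.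
have Hobj : Q2_obj Vf U x0 = T lam y0.
  rewrite /Q2_obj /T; apply: eq_bigr => f _.
  rewrite /y0 -mulr_suml mulrCA mulfV ?gt_eqF // mulr1.
  rewrite [LHS]big_mkcond; apply: eq_bigr => v _; rewrite /Uf inE.
  case: ifP => // /negbT; rewrite negb_and => /orP [] Hv; [by rewrite F4 | by rewrite F3].
have Hinv0 : Inv y0 y0.
  split => //.
  - move=> f v; rewrite /y0 divr_ge0 ?F1 ?(ltW (Hlam f)) //= ler_pdivrMr // mul1r.
    case: (boolP (v \in U)) => Hv; last by rewrite F3 // ltW.
    apply: le_trans (F5 f); rewrite (bigD1 v) //= lerDl; apply: sumr_ge0 => w _; exact: F1.
  - move=> f; rewrite /y0 -mulr_suml ler_pdivrMr // mul1r Hrowx; exact: F5.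
have HP0 : T lam y0 <= P lam y0.
  rewrite /P lerDl; apply: sumr_ge0 => v _; apply: sumr_ge0 => f _.
  apply: mulr_ge0; [exact: ltW | by rewrite divr_ge0 // ?F1 // ltW].
have [[Hb Hr _] HP] := reach_ok Hlam Hn0 Hinv0 Hreach.
have HPy : P lam y = T lam y + T lam y.
  rewrite /P; congr (_ + _).
  rewrite (eq_bigl predT); last first.
    by move=> v; rewrite deg0P; apply/forallP => f; apply: Hnofrac.
  rewrite /load exchange_big /T; apply: eq_bigr => f _; by rewrite mulr_sumr.
have HTy : T lam y <= \sum_(f | [exists v, y f v == 1]) lam f.
  rewrite /T [X in _ <= X]big_mkcond; apply: ler_sum => f _.
  case: ifP => Hex.
    have := Hr f; have := Hlam f; nra.
  rewrite big1 ?mulr0 // => v _.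
  case: (nf01 (Hb f v) (Hnofrac f v)) => // E.
  by move: Hex => /negbT /existsPn /(_ v); rewrite E eqxx.
have Hg := gain_ge0 Hlam Hph2.
lra.
Qed.
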